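(* (1) If $\mathbf n_1=(n_{1,0},\dots,n_{1,N})$ and $\mathbf n_2=(n_{2,0},\dots,n_{2,N})$ satisfy $\tilde n_{1,i}\ge\tilde n_{2,i}$ for all $i=0,\dots,N$ (tildes denoting nondecreasing rearrangements), then $d_{\mathbf n_1}(r)\ge d_{\mathbf n_2}(r)$ for all $r\ge0$. (2) If $\mathbf n_1=(n_{1,0},\dots,n_{1,N_1})$ and $\mathbf n_2=(n_{2,0},\dots,n_{2,N_2})$ are such that the multiset $\{n_{2,0},\dots,n_{2,N_2}\}$ is contained in the multiset $\{n_{1,0},\dots,n_{1,N_1}\}$, then $d_{\mathbf n_1}(r)\le d_{\mathbf n_2}(r)$ for all $r\ge0$.
   Context: For a vector $\mathbf n=(n_0,\dots,n_N)$ of positive integers ($N\ge1$), let $\tilde n_0\le\cdots\le\tilde n_N$ be its nondecreasing rearrangement, $n_{\min}=\tilde n_0$, $c_i=1-i+\min_{k'=1,\dots,N}\lfloor(\sum_{l=0}^{k'}\tilde n_l-i)/k'\rfloor$ for $i=1,\dots,n_{\min}$, and $d_{\mathbf n}(k)=\sum_{i=k+1}^{n_{\min}}c_i$ for integers $0\le k\le n_{\min}$; $d_{\mathbf n}(r)$ for real $r\in[0,n_{\min}]$ is the piecewise-linear interpolation of these points, and $d_{\mathbf n}(r)=0$ for $r>n_{\min}$. This is the diversity-multiplexing tradeoff of the $(n_0,\dots,n_N)$ Rayleigh product channel $\mathbf y=\sqrt{\mathsf{SNR}/(n_1\cdots n_N)}\mathbf H_1\cdots\mathbf H_N\mathbf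 x+\mathbf z$ with independent i.i.d. $\mathcal{CN}(0,1)$ matrices $\mathbf H_i\in\mathbb C^{n_{i-1}\times n_i}$. *)

(* Defs.v *)
From HB Require Import structures.
From mathcomp Require Import all_boot all_order all_algebra.
Set Implicit Arguments. Unset Strict Implicit. Unset Printing Implicit Defensive.
Import Order.TTheory GRing.Theory Num.Theory.

(* An antenna/dimension vector n = (n_0,...,n_N) is a seq nat of size N+1. *)

Definition nsorted (n : seq nat) : seq nat := sort leq n.

Definition nt (n : seq nat) (l : nat) : nat := nth 0%N (nsorted n) l.

Definition nmin (n : seq nat) : nat := nt n 0.

Definition Nof (n : seq nat) : nat := (size n).-1.

(* floor((sum_{l=0}^{k'} ñ_l - i)/k'); numerator is >= 0 for i <= n_min *)
Definition cterm (n : seq nat) (i k' : nat) : nat :=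
  ((\sum_(0 <= l < k'.+1) nt n l) - i) %/ k'.

(* min_{k'=1..N} cterm  (the seed value cterm 1 is itself one of the terms, N >= 1) *)
Definition cmin (n : seq nat) (i : nat) : nat :=
  \big[minn/cterm n i 1]_(1 <= k' < (Nof n).+1) cterm n i k'.

Definition c_coef (n : seq nat) (i : nat) : int :=
  (1 - (i%:Z) + (cmin n i)%:Z)%R.

Definition d_int (n : seq nat) (k : nat) : int :=
  (\sum_(k.+1 <= i < (nmin n).+1) c_coef n i)%R.

(* d_n(r) for real r >= 0: piecewise-linear interpolation on [0, n_min],
   zero for r > n_min (and d_n(n_min) = 0 by definition). *)
Definition dmt (R : archiNumFieldType) (n : seq nat) (r : R) : R :=
  let k := `|Num.floor r|%N in
  if (nmin n <= k)%N then 0%R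
  else ((d_int n k)%:~R + (r - k%:R) * ((d_int n k.+1)%:~R - (d_int n k)%:~R))%R.

Definition valid_dims (n : seq nat) : Prop :=
  (1 < size n)%N /\ all (fun x => 0 < x)%N n.

(* Main.v *)
Require Import Defs.
Set Implicit Arguments. Unset Strict Implicit.
From HB Require Import structures.
From mathcomp Require Import all_boot all_order all_algebra.
Import Order.TTheory GRing.Theory Num.Theory.

Lemma sorted_nsorted n : sorted leq (nsorted n).
Proof. exact: (sort_sorted leq_total). Qed.

Lemma size_nsorted n : size (nsorted n) = size n.
Proof. exact: size_sort. Qed.

Lemma nt_mono n l1 l2 : l1 <= l2 -> l2 < size n -> nt n l1 <= nt n l2.
Proof.
move=> h12 h2; rewrite /nt; apply: (sorted_leq_nth leq_trans leqnn) => //;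
 rewrite ?sorted_nsorted // !inE /= size_nsorted //; exact: leq_ltn_trans h2.
Qed.

Lemma count_sub (p : pred nat) (s1 s2 : seq nat) :
  (forall x, count_mem x s2 <= count_mem x s1) -> count p s2 <= count p s1.
Proof.
elim: s2 s1 => [|y t IH] s1 H //=.
have ys1 : y \in s1.
  rewrite -has_pred1 has_count; apply: leq_trans (H y); by rewrite /= eqxx.
rewrite (permP (perm_to_rem ys1)) /=; rewrite leq_add2l; apply: IH => x.
have := H x; rewrite (permP (perm_to_rem ys1)) /=; by rewrite leq_add2l.
Qed.

Lemma count_le_nth (s : seq nat) l : sorted leq s -> l < size s ->
  l.+1 <= count (fun y => y <= nth 0 s l) s.
Proof.
move=> ss ls; rewrite -[in X in count _ X](cat_take_drop l.+1 s) count_cat.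
apply: leq_trans _ (leq_addr _ _).
have -> : count (fun y => y <= nth 0 s l) (take l.+1 s) = size (take l.+1 s).
  apply/eqP; rewrite -all_count; apply/(all_nthP 0) => j.
  rewrite size_takel // => jl; rewrite nth_take //.
  apply: (sorted_leq_nth leq_trans leqnn) => //; rewrite !inE //.
  exact: leq_trans jl ls.
by rewrite size_takel.
Qed.

Lemma nth_le_count (s : seq nat) l x : sorted leq s -> l < size s ->
  l.+1 <= count (fun y => y <= x) s -> nth 0 s l <= x.
Proof.
move=> ss ls; apply: contraTT; rewrite -ltnNge => hx.
rewrite -ltnNge ltnS -[in X in count _ X](cat_take_drop l s) count_cat.
have -> : count (fun y => y <= x) (drop l s) = 0.
  apply/eqP; rewrite -leqn0 leqNgt -has_count; apply/(has_nthP 0) => -[j].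
  rewrite size_drop nth_drop ltn_subRL => jl.
  apply/negP; rewrite -ltnNge; apply: leq_trans hx _.
  apply: (sorted_leq_nth leq_trans leqnn) => //; rewrite ?inE //.
  exact: leq_addr.
rewrite addn0; apply: leq_trans (count_size _ _) _; rewrite size_take.
by case: ifP => // /negbT; rewrite -leqNgt.
Qed.

Lemma nt_sub n1 n2 l : (forall x, count_mem x n2 <= count_mem x n1) ->
  l < size n2 -> nt n1 l <= nt n2 l.
Proof.
move=> H ls.
have sz : size n2 <= size n1 by rewrite -!count_predT; apply: count_sub.
rewrite /nt; apply: nth_le_count; rewrite ?sorted_nsorted ?size_nsorted //.
  exact: leq_trans ls sz.
rewrite [X in count _ X]/nsorted count_sort.
apply: leq_trans _ (@count_sub (fun y => y <= nth 0 (nsorted n2) l) _ _ H).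
have := @count_le_nth (nsorted n2) l (sorted_nsorted n2) ; rewrite size_nsorted [X in count _ X]/nsorted count_sort.
by apply.
Qed.

Lemma sum_nt_le a b k : (forall l, l <= k -> nt a l <= nt b l) ->
  \sum_(0 <= l < k.+1) nt a l <= \sum_(0 <= l < k.+1) nt b l.
Proof.
move=> H; rewrite !big_mkord; apply: leq_sum => i _; apply: H.
by rewrite -ltnS.
Qed.

Lemma cterm_le a b i k : (forall l, l <= k -> nt a l <= nt b l) ->
  cterm a i k <= cterm b i k.
Proof.
move=> H; rewrite /cterm; apply: leq_div2r; apply: leq_sub2r; exact: sum_nt_le.
Qed.

Lemma bigmin_le_seq (x0 : nat) (F : nat -> nat) (r : seq nat) j : j \in r ->
  \big[minn/x0]_(k <- r) F k <= F j.
Proof.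
elim: r => [|y r IH] //; rewrite in_cons big_cons => /orP[/eqP ->|jr].
  exact: geq_minl.
apply: leq_trans (geq_minr _ _) _; exact: IH.
Qed.

Lemma bigmin_le (x0 : nat) (F : nat -> nat) m n j : m <= j < n ->
  \big[minn/x0]_(m <= k < n) F k <= F j.
Proof. by move=> h; apply: bigmin_le_seq; rewrite mem_index_iota. Qed.

Lemma bigmin_ge (x0 v : nat) (F : nat -> nat) m n :
  v <= x0 -> (forall k, m <= k < n -> v <= F k) ->
  v <= \big[minn/x0]_(m <= k < n) F k.
Proof.
move=> h0 H; rewrite big_seq; apply: (big_ind (fun x => v <= x)) => //.
  by move=> x y hx hy; rewrite leq_min hx hy.
by move=> k; rewrite mem_index_iota; apply: H.
Qed.

Lemma nmin_le_nt n l : l < size n -> nmin n <= nt n l.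
Proof. move=> h; exact: nt_mono. Qed.

Lemma cterm_ge n i k : valid_dims n -> 0 < k -> k <= Nof n -> i <= nmin n ->
  i <= cterm n i k.
Proof.
move=> [sz _] k0 kN inm; rewrite /cterm leq_divRL //.
have kS : k < size n by move: kN; rewrite /Nof; case: (size n) sz.
have S : k.+1 * nmin n <= \sum_(0 <= l < k.+1) nt n l.
  rewrite -{1}(subn0 k.+1) -sum_nat_const_nat !big_mkord.
  apply: leq_sum => l _; apply: nmin_le_nt; apply: leq_ltn_trans kS.
  by rewrite -ltnS.
have S2 : i + i * k <= \sum_(0 <= l < k.+1) nt n l.
  apply: leq_trans S; rewrite mulSn mulnC; apply: leq_add => //.
  by rewrite leq_mul2l inm orbT.
rewrite leq_subRL //; apply: leq_trans S2; exact: leq_addr.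
Qed.

Lemma cmin_ge n i : valid_dims n -> i <= nmin n -> i <= cmin n i.
Proof.
move=> v inm; have [sz _] := v.
have N1 : 1 <= Nof n by move: sz; rewrite /Nof; case: (size n) => // [[]].
rewrite /cmin; apply: bigmin_ge; first exact: cterm_ge.
move=> k /andP[k1 kN]; apply: cterm_ge => //.
Qed.

Local Open Scope ring_scope.

Lemma c_ge0 n i : valid_dims n -> (i <= nmin n)%N -> 0 <= c_coef n i.
Proof.
move=> v h; have hc := cmin_ge v h; rewrite /c_coef addrAC.
rewrite subr_ge0; apply: le_trans (_ : (cmin n i)%:Z <= _).
  by rewrite lez_nat.
by rewrite lerDr.
Qed.

Lemma c_le a b i : (cmin a i <= cmin b i)%N -> c_coef a i <= c_coef b i.
Proof. by move=> h; rewrite /c_coef lerD2l lez_nat. Qed.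

Lemma sum_ext (F : nat -> int) a m m' : (m <= m')%N ->
  (forall i, (m <= i < m')%N -> 0 <= F i) ->
  \sum_(a <= i < m) F i <= \sum_(a <= i < m') F i.
Proof.
move=> mm H; case: (leqP a m) => am.
  rewrite (big_cat_nat am mm) /= lerDl big_seq sumr_ge0 // => i.
  by rewrite mem_index_iota; apply: H.
rewrite big_geq ?(ltnW am) // big_seq sumr_ge0 // => i.
rewrite mem_index_iota => /andP[ai im']; apply: H; rewrite im' andbT.
exact: leq_trans (ltnW am) ai.
Qed.

Lemma d_ge0 n k : valid_dims n -> 0 <= d_int n k.
Proof.
move=> v; rewrite /d_int big_seq sumr_ge0 // => i.
by rewrite mem_index_iota => /andP[_ h]; apply: c_ge0.
Qed.

Lemma d_le a b k : valid_dims b -> (nmin a <= nmin b)%N ->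
  (forall i, c_coef a i <= c_coef b i) -> d_int a k <= d_int b k.
Proof.
move=> v hm hc; rewrite /d_int.
apply: (le_trans (y := \sum_(k.+1 <= i < (nmin a).+1) c_coef b i)).
  by apply: ler_sum => i _; apply: hc.
apply: sum_ext => // i /andP[_ h]; exact: c_ge0.
Qed.

Lemma interp_le (R : numDomainType) (x y x' y' t : R) :
  x <= x' -> y <= y' -> 0 <= t -> t <= 1 ->
  x + t * (y - x) <= x' + t * (y' - x').
Proof.
move=> hx hy t0 t1.
have E : forall u v : R, u + t * (v - u) = (1 - t) * u + t * v.
  by move=> u v; rewrite mulrBr mulrBl mul1r addrA addrAC.
rewrite !E; apply: lerD; apply: ler_wpM2l => //; by rewrite subr_ge0.
Qed.

Lemma interp_ge0 (R : numDomainType) (x y t : R) :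
  0 <= x -> 0 <= y -> 0 <= t -> t <= 1 -> 0 <= x + t * (y - x).
Proof.
move=> hx hy t0 t1.
have := @interp_le R 0 0 x y t hx hy t0 t1; by rewrite subrr mulr0 addr0.
Qed.

Lemma floor_t (R : archiRealFieldType) (r : R) : 0 <= r ->
  0 <= r - (`|Num.floor r|%N)%:R /\ r - (`|Num.floor r|%N)%:R <= 1.
Proof.
move=> r0.
have fk : ((`|Num.floor r|%N)%:R : R) = (Num.floor r)%:~R.
  have h : (`|Num.floor r|%N : int) = Num.floor r.
    by rewrite gez0_abs // floor_ge0.
  by rewrite -h.
rewrite fk subr_ge0 floor_le; split => //.
rewrite lerBlDl; apply: ltW; have := floorD1_gt r.
by rewrite intrD.
Qed.

Lemma dmt_le (R : archiRealFieldType) a b (r : R) :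
  valid_dims b -> (nmin a <= nmin b)%N ->
  (forall k, d_int a k <= d_int b k) -> 0 <= r -> dmt a r <= dmt b r.
Proof.
move=> vb hm hd r0; have [t0 t1] := floor_t r0.
rewrite /dmt; set K := `|Num.floor r|%N.
case: (leqP (nmin b) K) => hb.
  by rewrite (leq_trans hm hb).
case: (leqP (nmin a) K) => ha.
  by apply: interp_ge0 => //; rewrite ler0z; apply: d_ge0.
by apply: interp_le => //; rewrite ler_int.
Qed.

Lemma N1 n : valid_dims n -> (1 <= Nof n)%N.
Proof. by move=> [sz _]; move: sz; rewrite /Nof; case: (size n) => // [[]]. Qed.

Lemma NS n k : (k <= Nof n)%N -> (1 < size n)%N -> (k < size n)%N.
Proof. by rewrite /Nof; case: (size n). Qed.

Lemma cmin_cmp a b i : valid_dims a -> valid_dims b -> (Nof b <= Nof a)%N ->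
  (forall l, (l < size b)%N -> (nt a l <= nt b l)%N) -> (cmin a i <= cmin b i)%N.
Proof.
move=> va vb hN H.
have hb := N1 vb; have ha := N1 va.
have hk : forall k, (1 <= k <= Nof b)%N -> (cmin a i <= cterm b i k)%N.
  move=> k /andP[k1 kN].
  apply: leq_trans (_ : cterm a i k <= _)%N.
    by rewrite /cmin; apply: bigmin_le; rewrite k1 ltnS (leq_trans kN hN).
  apply: cterm_le => l lk; apply: H; apply: NS (leq_trans lk kN) _.
  by case: vb.
rewrite {2}/cmin; apply: bigmin_ge; first by apply: hk; rewrite leqnn hb.
by move=> k /andP[k1]; rewrite ltnS => kN; apply: hk; rewrite k1 kN.
Qed.

Theorem corollary1 (R : archiRealFieldType) :
  (forall n1 n2 : seq nat,
     valid_dims n1 -> valid_dims n2 -> size n1 = size n2 ->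
     (forall i, (i < size n1)%N -> (nt n2 i <= nt n1 i)%N) ->
     forall r : R, (0 <= r)%R -> (dmt n2 r <= dmt n1 r)%R)
  /\
  (forall n1 n2 : seq nat,
     valid_dims n1 -> valid_dims n2 ->
     (forall x : nat, (count_mem x n2 <= count_mem x n1)%N) ->
     forall r : R, (0 <= r)%R -> (dmt n1 r <= dmt n2 r)%R).
Proof.
split.
  move=> n1 n2 v1 v2 hs H r r0.
  have hm : (nmin n2 <= nmin n1)%N by apply: H; case: v1 => /ltnW.
  apply: dmt_le => // k; apply: d_le => // i; apply: c_le.
  apply: cmin_cmp => //; first by rewrite /Nof hs.
move=> n1 n2 v1 v2 H r r0.
have sz : (size n2 <= size n1)%N by rewrite -!count_predT; apply: count_sub.
have hm : (nmin n1 <= nmin n2)%N by apply: nt_sub => //; case: v2 => /ltnW.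
apply: dmt_le => // k; apply: d_le => // i; apply: c_le.
apply: cmin_cmp => //; first by rewrite /Nof -!subn1 leq_sub2r.
by move=> l; apply: nt_sub.
Qed.
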